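(* Let $d,l,m\geq 1$ be integers, and fix arbitrary norms $\|\cdot\|$ on the real vector space $H(d)$ of $d\times d$ Hermitian matrices and on the real vector space $M_{lm}(\mathbb{R})$ of real $l\times m$ matrices. Let $\mathcal{Q}=\{P_1,\dots,P_l\}$ be a measurement scheme consisting of $l$ POVMs, each with outcome set $\{1,\dots,m\}$, and suppose $\mathcal{Q}$ determines any pure state among all states. Then there exists $\epsilon>0$ such that every measurement scheme $\mathcal{Q}'=\{P'_1,\dots,P'_l\}$ (of $l$ POVMs with outcome set $\{1,\dots,m\}$) which is $\epsilon$-close to $\mathcal{Q}$ also determines any pure state among all states.
   Context: A POVM with outcome set $\{1,\dots,m\}$ is a map $j\mapsto P(j)$ into $H(d)$ with $P(j)\geq 0$ for all $j$ and $\sum_{j=1}^m P(j)=\mathbb{1}$. A measurement scheme $\mathcal{Q}=\{P_1,\dots,P_l\}$ induces the real-linear map $M_{\mathcal{Q}}:H(d)\to M_{lm}(\mathbb{R})$, $M_{\mathcal{Q}}(X)_{i,j}=\mathrm{tr}(X P_i(j))$. $\mathcal{Q}$ determines any pure state among all states if for every pure state $\sigma=|\psi\rangle\langle\psi|$ and every state (density matrix) $\varrho$, $M_{\mathcal{Q}}(\sigma)=M_{\mathcal{Q}}(\varrho)$ implies $\varrho=\sigma$. Two measurement schemes $\mathcal{Q},\mathcal{Q}'$ are $\epsilon$-close if $\|M_{\mathcal{Q}}-M_{\mathcal{Q}'}\|_\infty<\epsilon$, where $\|\cdot\|_\infty$ is the operator norm of linear maps $H(d)\to M_{lm}(\mathbb{R})$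 with respect to the fixed norms. *)

(* Defs.v *)
From HB Require Import structures.
From mathcomp Require Import all_boot all_order all_algebra.
From mathcomp Require Import complex.
From mathcomp Require Import boolp classical_sets reals.

Set Implicit Arguments.
Unset Strict Implicit.
Unset Printing Implicit Defensive.

Import Order.TTheory GRing.Theory Num.Theory.
Local Open Scope ring_scope.

Section QDefs.
Variable R : realType.
Local Notation C := R[i].

Definition adj (d : nat) (X : 'M[C]_d) : 'M[C]_d := (map_mx Num.conj X)^T.

Definition hermitian (d : nat) (X : 'M[C]_d) : Prop := adj X = X.

Definition psd (d : nat) (X : 'M[C]_d) : Prop :=
  hermitian X /\ forall v : 'cV[C]_d, 0 <= ((map_mx Num.conj v)^T *m X *m v) 0 0.

Definition is_state (d : nat) (rho : 'M[C]_d) : Prop := psd rho /\ \tr rho = 1.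

Definition is_pure_state (d : nat) (sigma : 'M[C]_d) : Prop :=
  exists psi : 'cV[C]_d,
    ((map_mx Num.conj psi)^T *m psi) 0 0 = 1 /\ sigma = psi *m (map_mx Num.conj psi)^T.

Definition is_POVM (d m : nat) (P : 'I_m -> 'M[C]_d) : Prop :=
  (forall j, psd (P j)) /\ \sum_(j < m) P j = 1%:M.

Definition is_scheme (d l m : nat) (Q : 'I_l -> 'I_m -> 'M[C]_d) : Prop :=
  forall i, is_POVM (Q i).

Definition MQ (d l m : nat) (Q : 'I_l -> 'I_m -> 'M[C]_d) (X : 'M[C]_d)
  : 'M[R]_(l, m) := \matrix_(i, j) complex.Re (\tr (X *m Q i j)).

Definition determines_pure (d l m : nat) (Q : 'I_l -> 'I_m -> 'M[C]_d) : Prop :=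
  forall sigma rho : 'M[C]_d, is_pure_state sigma -> is_state rho ->
    MQ Q sigma = MQ Q rho -> rho = sigma.

(* a norm on the real vector space H(d) (only its values on Hermitian
   matrices matter) *)
Definition is_norm_H (d : nat) (N : 'M[C]_d -> R) : Prop :=
  (forall X, hermitian X -> 0 <= N X) /\
  (forall X, hermitian X -> N X = 0 -> X = 0) /\
  (forall (r : R) X, hermitian X -> N ((r%:C)%C *: X) = `|r| * N X) /\
  (forall X Y, hermitian X -> hermitian Y -> N (X + Y) <= N X + N Y).

Definition is_norm_M (l m : nat) (N : 'M[R]_(l, m) -> R) : Prop :=
  (forall A, 0 <= N A) /\
  (forall A, N A = 0 -> A = 0) /\
  (forall (r : R) A, N (r *: A) = `|r| * N A) /\
  (forall A B, N (A + B) <= N A + N B).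

Definition opnorm (d l m : nat) (NH : 'M[C]_d -> R) (NM : 'M[R]_(l, m) -> R)
  (L : 'M[C]_d -> 'M[R]_(l, m)) : R :=
  sup [set NM (L X) | X in [set X : 'M[C]_d | hermitian X /\ NH X <= 1]].

Definition eps_close (d l m : nat) (NH : 'M[C]_d -> R) (NM : 'M[R]_(l, m) -> R)
  (eps : R) (Q Q' : 'I_l -> 'I_m -> 'M[C]_d) : Prop :=
  opnorm NH NM (fun X => MQ Q X - MQ Q' X) < eps.

End QDefs.

(* Main.v *)
Require Import Defs.
From HB Require Import structures.
From mathcomp Require Import all_boot all_order all_algebra.
From mathcomp Require Import complex.
From mathcomp Require spectral sesquilinear.
From mathcomp Require Import boolp classical_sets reals topology normedtype derive.
From mathcomp Require Import ring lra.
Set Implicit Arguments. Unset Strict Implicit. Unset Printing Implicit Defensive.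
Import Order.TTheory GRing.Theory Num.Theory Num.Def.
Import numFieldNormedType.Exports.
Local Open Scope ring_scope.
Section Alg.
Variable R : realType.
Local Notation C := R[i].

Definition adjm m n (A : 'M[C]_(m, n)) : 'M[C]_(n, m) := (map_mx Num.conj A)^T.
Definition qf d (A : 'M[C]_d) (u : 'cV[C]_d) : C := (adjm u *m A *m u) 0 0.

Lemma adjmE d (A : 'M[C]_d) : adj A = adjm A. Proof. by []. Qed.
Lemma adjm_entry m n (A : 'M[C]_(m,n)) i j : adjm A i j = (A j i)^*.
Proof. by rewrite !mxE. Qed.
Lemma adjmK m n (A : 'M[C]_(m,n)) : adjm (adjm A) = A.
Proof. by apply/matrixP => i j; rewrite !mxE conjCK. Qed.
Lemma adjmM m n p (A : 'M[C]_(m,n)) (B : 'M[C]_(n,p)) :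
  adjm (A *m B) = adjm B *m adjm A.
Proof.
apply/matrixP => i j; rewrite !mxE rmorph_sum; apply: eq_bigr => k _.
by rewrite !mxE rmorphM mulrC.
Qed.
Lemma adjmD m n (A B : 'M[C]_(m,n)) : adjm (A + B) = adjm A + adjm B.
Proof. by apply/matrixP => i j; rewrite !mxE rmorphD. Qed.
Lemma adjmN m n (A : 'M[C]_(m,n)) : adjm (- A) = - adjm A.
Proof. by apply/matrixP => i j; rewrite !mxE rmorphN. Qed.
Lemma adjmB m n (A B : 'M[C]_(m,n)) : adjm (A - B) = adjm A - adjm B.
Proof. by rewrite adjmD adjmN. Qed.
Lemma adjmZ m n c (A : 'M[C]_(m,n)) : adjm (c *: A) = c^* *: adjm A.
Proof. by apply/matrixP => i j; rewrite !mxE rmorphM. Qed.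
Lemma adjm0 m n : adjm (0 : 'M[C]_(m,n)) = 0.
Proof. by apply/matrixP => i j; rewrite !mxE rmorph0. Qed.
Lemma adjm1 n : adjm (1%:M : 'M[C]_n) = 1%:M.
Proof. by apply/matrixP => i j; rewrite !mxE rmorphMn rmorph1 eq_sym. Qed.

Lemma qf_real d (A : 'M[C]_d) u : Defs.hermitian A -> qf A u \is Num.real.
Proof.
move=> hA; rewrite CrealE; apply/eqP.
have -> : (qf A u)^* = (adjm (adjm u *m A *m u)) 0 0 by rewrite adjm_entry.
by rewrite !adjmM adjmK -adjmE hA mulmxA.
Qed.

End Alg.
Section Spec.
Variable R : realType.
Local Notation C := R[i].

Lemma spec_dec d (X : 'M[C]_d) : Defs.hermitian X ->
  exists U : 'M[C]_d, exists D : 'rV[C]_d,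
    U *m adjm U = 1%:M /\ adjm U *m U = 1%:M /\ X = adjm U *m diag_mx D *m U.
Proof.
move=> hX.
have nX : X \is spectral.normalmx.
  rewrite qualifE; apply/eqP.
  have -> : (X ^t conjC)%sesqui = X by rewrite -map_trmx; exact: hX.
  by [].
set U := spectral.spectralmx X; set D := spectral.spectral_diag X.
have uU := spectral.spectral_unitarymx X.
have E : invmx U = adjm U by rewrite spectral.invmx_unitary // /adjm map_trmx.
have U1 : U *m adjm U = 1%:M by rewrite -E mulmxV // spectral.unitarymx_unit.
exists U, D; split => //; split.
  by rewrite -E mulVmx // spectral.unitarymx_unit.
by rewrite -E; apply/spectral.orthomx_spectralP.
Qed.
End Spec.
Section Lin.
Variable R : realType.
Local Notation C := R[i].

Lemma ReD (x y : C) : complex.Re (x + y) = complex.Re x + complex.Re y.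
Proof. by case: x; case: y. Qed.
Lemma ImD (x y : C) : complex.Im (x + y) = complex.Im x + complex.Im y.
Proof. by case: x; case: y. Qed.
Lemma ReN (x : C) : complex.Re (- x) = - complex.Re x.
Proof. by case: x. Qed.
Lemma ReM_r (r : R) (x : C) : complex.Re ((r%:C)%C * x) = r * complex.Re x.
Proof. by case: x => a b /=; rewrite mul0r subr0. Qed.
Lemma ImM_r (r : R) (x : C) : complex.Im ((r%:C)%C * x) = r * complex.Im x.
Proof. by case: x => a b /=; rewrite mul0r addr0. Qed.
Lemma Re_sum I (s : seq I) (P : pred I) (F : I -> C) :
  complex.Re (\sum_(i <- s | P i) F i) = \sum_(i <- s | P i) complex.Re (F i).
Proof. by elim/big_rec2: _ => // i y1 y2 _ <-; rewrite ReD. Qed.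
Lemma Im_sum I (s : seq I) (P : pred I) (F : I -> C) :
  complex.Im (\sum_(i <- s | P i) F i) = \sum_(i <- s | P i) complex.Im (F i).
Proof. by elim/big_rec2: _ => // i y1 y2 _ <-; rewrite ImD. Qed.

Variables (d l m : nat) (Q : 'I_l -> 'I_m -> 'M[C]_d).

Lemma MQD A B : MQ Q (A + B) = MQ Q A + MQ Q B.
Proof. by apply/matrixP => i j; rewrite !mxE mulmxDl mxtraceD ReD. Qed.
Lemma MQN A : MQ Q (- A) = - MQ Q A.
Proof. by apply/matrixP => i j; rewrite !mxE mulNmx raddfN ReN. Qed.
Lemma MQB A B : MQ Q (A - B) = MQ Q A - MQ Q B.
Proof. by rewrite MQD MQN. Qed.
Lemma MQZ (r : R) A : MQ Q ((r%:C)%C *: A) = r *: MQ Q A.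
Proof. by apply/matrixP => i j; rewrite !mxE -scalemxAl mxtraceZ ReM_r. Qed.
Lemma MQ0 : MQ Q 0 = 0.
Proof. by apply/matrixP => i j; rewrite !mxE mul0mx mxtrace0. Qed.
End Lin.
Section Key.
Variable R : realType.
Local Notation C := R[i].

Lemma qf_spec d (U : 'M[C]_d) (D : 'rV[C]_d) u :
  qf (adjm U *m diag_mx D *m U) u =
  \sum_k D 0 k * (((U *m u) k 0)^* * (U *m u) k 0).
Proof.
rewrite /qf !mulmxA -[adjm u *m adjm U]adjmM -mulmxA mxE.
apply: eq_bigr => k _; rewrite mul_mx_diag !mxE.
by rewrite [X in X * _]mulrC mulrA.
Qed.

Lemma tr_spec d (U : 'M[C]_d) (D : 'rV[C]_d) :
  U *m adjm U = 1%:M -> \tr (adjm U *m diag_mx D *m U) = \sum_k D 0 k.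
Proof.
move=> U1; rewrite mxtrace_mulC mulmxA U1 mul1mx mxtrace_diag.
by [].
Qed.

Lemma delta_entry d (k j : 'I_d) : (delta_mx k 0 : 'cV[C]_d) j 0 = (j == k)%:R.
Proof. by rewrite mxE eqxx andbT eq_sym. Qed.

Lemma sum_delta d (D : 'rV[C]_d) k :
  \sum_j D 0 j * (((delta_mx k 0 : 'cV[C]_d) j 0)^* * (delta_mx k 0 : 'cV[C]_d) j 0)
  = D 0 k.
Proof.
rewrite (bigD1 k) //= big1 => [|j jk]; rewrite !delta_entry ?eqxx.
  by rewrite conjC1 !mulr1 addr0.
by rewrite (negbTE jk) conjC0 !mul0r mulr0.
Qed.

End Key.
Section Key2.
Variable R : realType.
Local Notation C := R[i].

Lemma sum_two d (D : 'rV[C]_d) k0 k (a b : C) : k != k0 ->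
  let v := a *: (delta_mx k0 0 : 'cV[C]_d) + b *: delta_mx k 0 in
  \sum_j D 0 j * ((v j 0)^* * v j 0) = D 0 k0 * (a^* * a) + D 0 k * (b^* * b).
Proof.
move=> kk0 v.
have vE j : v j 0 = a * (j == k0)%:R + b * (j == k)%:R.
  by rewrite /v !mxE !eqxx !andbT.
rewrite (bigD1 k0) //= (bigD1 k) //= big1 => [|j /andP [jk0 jk]].
  rewrite !vE eqxx (negbTE kk0) eq_sym (negbTE kk0) !mulr0 !mulr1 addr0 add0r.
  by rewrite eqxx mulr1 addr0.
by rewrite vE (negbTE jk0) (negbTE jk) !mulr0 addr0 conjC0 !mul0r mulr0.
Qed.

End Key2.
Section Key3.
Variable R : realType.
Local Notation C := R[i].

Lemma real_lt0_Re (z : C) : z \is Num.real -> z < 0 -> complex.Re z < 0.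
Proof.
move=> zr; rewrite ltcE => /andP [_ h]; exact: h.
Qed.

Lemma mul_delta_entry d p (A : 'M[C]_(p, d)) i k :
  (A *m (delta_mx k 0 : 'cV[C]_d)) i 0 = A i k.
Proof.
rewrite mxE (bigD1 k) //= big1 => [|j jk]; rewrite mxE ?eqxx ?mulr1 ?addr0 //.
by rewrite (negbTE jk) mulr0.
Qed.

Lemma entry_add_scale p q (A B : 'M[C]_(p,q)) x y i j :
  (x *: A + y *: B) i j = x * A i j + y * B i j.
Proof. by rewrite !mxE. Qed.

Lemma cc_gt0 (x : C) : x != 0 -> 0 < x^* * x.
Proof. by move=> x0; rewrite mulrC mul_conjC_gt0. Qed.
Lemma cc_ge0 (x : C) : 0 <= x^* * x.
Proof. by rewrite mulrC mul_conjC_ge0. Qed.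

Lemma Creal_Im0 (z : C) : z \is Num.real -> complex.Im z = 0.
Proof.
rewrite realE => /orP [] ; rewrite lecE => /andP [/eqP h _] //.
Qed.

Lemma key d l m (Q : 'I_l -> 'I_m -> 'M[C]_d) (X : 'M[C]_d) (psi : 'cV[C]_d) :
  determines_pure Q -> Defs.hermitian X -> \tr X = 0 ->
  (forall u, (adjm psi *m u) 0 0 = 0 -> 0 <= complex.Re (qf X u)) ->
  MQ Q X = 0 -> X = 0.
Proof.
move=> dp hX trX pos MX.
have [U [D [U1 [U1' XE]]]] := spec_dec hX.
have qfX u : qf X u = \sum_k D 0 k * (((U *m u) k 0)^* * (U *m u) k 0).
  by rewrite XE qf_spec.
pose e k : 'cV[C]_d := delta_mx k 0.
have Ue k : U *m (adjm U *m e k) = e k by rewrite mulmxA U1 mul1mx.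
have De k : qf X (adjm U *m e k) = D 0 k by rewrite qfX Ue sum_delta.
have Dreal k : D 0 k \is Num.real by rewrite -De; exact: qf_real.
have trD : \sum_k D 0 k = 0 by rewrite -(tr_spec D U1) -XE.
have [[k0 Dk0]|Dnn] := pselect (exists k, D 0 k < 0); last first.
  have Dge k : 0 <= D 0 k.
    rewrite real_leNgt ?Dreal ?real0 //; apply/negP => Dk; apply: Dnn; by exists k.
  have D0 k : D 0 k = 0 by apply: (psumr_eq0P (fun i _ => Dge i) trD).
  rewrite XE; have -> : diag_mx D = 0.
    by apply/matrixP => i j; rewrite !mxE D0 mul0rn.
  by rewrite mulmx0 mul0mx.
have Dpos k : k != k0 -> 0 <= D 0 k.
  move=> kk0; rewrite real_leNgt ?Dreal ?real0 //; apply/negP => Dk.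
  pose b := U *m psi.
  have [a [orth neg]] : exists a : 'cV[C]_d, (adjm b *m a) 0 0 = 0 /\
      \sum_j D 0 j * ((a j 0)^* * a j 0) < 0.
    have [bk0|bkn0] := eqVneq (b k 0) 0.
      exists (e k); rewrite sum_delta mul_delta_entry adjm_entry bk0 conjC0.
      by split.
    exists ((b k 0)^* *: e k0 + (- (b k0 0)^*) *: e k); split.
      rewrite mulmxDr -!scalemxAr.
      rewrite entry_add_scale !mul_delta_entry !adjm_entry.
      by rewrite mulNr mulrC addrN.
    rewrite sum_two //.
    have h1 : D 0 k0 * (((b k 0)^*)^* * (b k 0)^*) < 0.
      by rewrite pmulr_llt0 // cc_gt0 // conjC_eq0.
    have h2 : D 0 k * ((- (b k0 0)^*)^* * - (b k0 0)^*) <= 0.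
      by rewrite nmulr_rle0 // ?cc_ge0 // ltW.
    by have := ltr_leD h1 h2; rewrite addr0.
  set u := adjm U *m a.
  have uo : (adjm psi *m u) 0 0 = 0.
    by rewrite /u mulmxA -adjmM.
  have := pos u uo.
  have qr : qf X u \is Num.real by exact: qf_real.
  have : qf X u < 0 by rewrite qfX /u mulmxA U1 mul1mx.
  move=> /(real_lt0_Re qr) h; by rewrite leNgt h.
have Dk0r := Dreal k0.
set mu := - D 0 k0.
have mu_gt0 : 0 < mu by rewrite oppr_gt0.
have mur : mu \is Num.real by rewrite rpredN.
have muir : mu^-1 \is Num.real by rewrite rpredV.
pose v := adjm U *m e k0.
pose sig := v *m adjm v.
pose rho := sig + mu^-1 *: X.
have aE w : (adjm v *m w) 0 0 = (U *m w) k0 0.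
  rewrite /v adjmM adjmK -mulmxA.
  have -> : (adjm (e k0) *m (U *m w)) 0 0 = ((adjm (adjm (U *m w) *m e k0)) 0 0).
    by rewrite adjmM adjmK.
  by rewrite adjm_entry mul_delta_entry adjm_entry conjCK.
have vv : (adjm v *m v) 0 0 = 1.
  by rewrite aE /v mulmxA U1 mul1mx /e mxE !eqxx.
have sig_pure : is_pure_state sig by exists v.
have qfsig w : qf sig w = ((U *m w) k0 0)^* * (U *m w) k0 0.
  rewrite /qf /sig -aE.
  have -> : adjm w *m (v *m adjm v) *m w = (adjm w *m v) *m (adjm v *m w).
    by rewrite !mulmxA.
  have -> : adjm w *m v = adjm (adjm v *m w) by rewrite adjmM adjmK.
  rewrite mxE big_ord1 adjm_entry.
  by [].
have qfD A B w : qf (A + B) w = qf A w + qf B w.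
  by rewrite /qf mulmxDr mulmxDl mxE.
have qfZ c A w : qf (c *: A) w = c * qf A w.
  by rewrite /qf -scalemxAr -scalemxAl mxE.
have rho_state : is_state rho.
  split; last first.
    rewrite mxtraceD mxtraceZ trX mulr0 addr0 /sig mxtrace_mulC.
    by rewrite /mxtrace big_ord1 vv.
  split.
    have hX' : adjm X = X := hX.
    rewrite /Defs.hermitian adjmE adjmD adjmZ hX' /sig adjmM adjmK.
    by rewrite (CrealP muir).
  move=> w; rewrite -/(qf rho w) qfD qfZ qfsig qfX (bigD1 k0) //=.
  set a0 := _ * _; set S := \sum_(j | _) _.
  have -> : a0 + mu^-1 * (D 0 k0 * a0 + S) = mu^-1 * S.
    rewrite mulrDr mulrA -[D 0 k0]opprK -/mu mulrN mulVf ?gt_eqF //.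
    by rewrite mulN1r addrA addrN add0r.
  apply: mulr_ge0; first by rewrite invr_ge0 ltW.
  apply: sumr_ge0 => j jk0; apply: mulr_ge0; first exact: Dpos.
  exact: cc_ge0.
have Mrho : MQ Q sig = MQ Q rho.
  rewrite /rho MQD.
  have -> : mu^-1 = ((complex.Re mu^-1)%:C)%C.
    by rewrite [LHS]complexE (Creal_Im0 muir) mulr0 addr0.
  by rewrite MQZ MX scaler0 addr0.
have := dp sig rho sig_pure rho_state Mrho.
move=> /(congr1 (fun M => M - sig)); rewrite /rho [sig + _]addrC addrK subrr => /eqP.
by rewrite scaler_eq0 invr_eq0 gt_eqF //= => /eqP.
Qed.
End Key3.
Section Topo.
Variable R : realType.
Local Notation C := R[i].
Variable n : nat.
Local Notation V := 'rV[R]_n.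

Lemma lip_cont (f : V -> R) (L : R) :
  (forall x y, `|f x - f y| <= L * `|x - y|) -> continuous f.
Proof.
move=> Lf x; apply/(@cvgrPdist_lt _ _ _ _ (nbhs_filter x)) => e e0.
have := @nbhs_normP R V x (fun t => `|f x - f t| < e).
move=> [_ h]; apply: h; exists (e / (`|L| + 1)).
  by rewrite /= divr_gt0 // ltr_wpDl.
move=> y /= xy; apply: (le_lt_trans (Lf x y)).
have L1 : 0 < `|L| + 1 by rewrite ltr_wpDl.
apply: (le_lt_trans (ler_wpM2r _ (ler_norm L))) => //.
apply: (@le_lt_trans _ _ ((`|L| + 1) * `|x - y|)).
  by rewrite ler_wpM2r // lerDl.
by rewrite mulrC -ltr_pdivlMr.
Qed.

End Topo.
Section Topo2.
Variable R : realType.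
Variable n : nat.
Local Notation V := 'rV[R]_n.
Lemma contD (f g : V -> R) : continuous f -> continuous g -> continuous (fun z => f z + g z).
Proof. move=> cf cg z. apply: (@cvgD _ _ _ _ (nbhs_filter z)). exact: cf. exact: cg. Qed.
Lemma contN (f : V -> R) : continuous f -> continuous (fun z => - f z).
Proof. move=> cf z. apply: (@cvgN _ _ _ _ (nbhs_filter z)). exact: cf. Qed.
Lemma contM (f g : V -> R) : continuous f -> continuous g -> continuous (fun z => f z * g z).
Proof. move=> cf cg z. apply: (@cvgM _ _ _ (nbhs_filter z)). exact: cf. exact: cg. Qed.
Lemma contB (f g : V -> R) : continuous f -> continuous g -> continuous (fun z => f z - g z).
Proof. by move=> cf cg; apply: contD => //; apply: contN. Qed.
End Topo2.
Section Topo3.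
Local Open Scope classical_set_scope.
Variable R : realType.
Local Notation C := R[i].
Variable n : nat.
Local Notation V := 'rV[R]_n.

Lemma coord_le_norm (z : V) k : `|z 0 k| <= `|z|.
Proof.
rewrite [X in _ <= X]/normr /= mx_normrE.
by apply: (le_bigmax _ (fun ij => `|z ij.1 ij.2|) (0, k)).
Qed.

Lemma norm_le (z : V) c : 0 <= c -> (forall k, `|z 0 k| <= c) -> `|z| <= c.
Proof.
move=> c0 h; rewrite [X in X <= _]/normr /= mx_normrE.
apply: bigmax_le => // -[i k] _ /=; by rewrite ord1.
Qed.

Lemma cont_coord k : continuous (fun z : V => z 0 k).
Proof. exact: coord_continuous. Qed.
Lemma cont_cst (c : R) : continuous (fun _ : V => c).
Proof. exact: cst_continuous. Qed.
Lemma contA (f : V -> R) : continuous f -> continuous (fun z => `|f z|).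
Proof.
move=> cf z; apply: (@continuous_comp _ _ _ f normr z (cf z)).
exact: norm_continuous.
Qed.
Lemma cont_sum (I : Type) (s : seq I) (P : pred I) (F : I -> V -> R) :
  (forall i, continuous (F i)) -> continuous (fun z => \sum_(i <- s | P i) F i z).
Proof.
move=> hF; elim: s => [|x s IH].
  have -> : (fun z => \sum_(i <- [::] | P i) F i z) = fun=> 0.
    by apply/funext => z; rewrite big_nil.
  exact: cont_cst.
have -> : (fun z => \sum_(i <- x :: s | P i) F i z) =
  (fun z => (if P x then F x z else 0) + \sum_(i <- s | P i) F i z).
  apply/funext => z; rewrite big_cons; case: (P x) => //; by rewrite add0r.
apply: contD => //; case: (P x) => //; exact: cont_cst.
Qed.

Definition ccont (f : V -> C) :=
  continuous (fun z => complex.Re (f z)) /\ continuous (fun z => complex.Im (f z)).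

Lemma ccont_cst (c : C) : ccont (fun=> c).
Proof. by split; apply: cst_continuous. Qed.

Lemma ccont_cplx (g h : V -> R) : continuous g -> continuous h ->
  ccont (fun z => Complex (g z) (h z)).
Proof. by move=> cg ch; split. Qed.

Lemma ccont_add (f g : V -> C) : ccont f -> ccont g -> ccont (fun z => f z + g z).
Proof.
move=> [f1 f2] [g1 g2]; split.
  have -> : (fun z => complex.Re (f z + g z)) =
    (fun z => complex.Re (f z) + complex.Re (g z)).
    by apply/funext => z; rewrite ReD.
  exact: contD.
have -> : (fun z => complex.Im (f z + g z)) =
  (fun z => complex.Im (f z) + complex.Im (g z)).
  by apply/funext => z; rewrite ImD.
exact: contD.
Qed.

Lemma ccont_opp (f : V -> C) : ccont f -> ccont (fun z => - f z).
Proof.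
move=> [f1 f2]; split.
  have -> : (fun z => complex.Re (- f z)) = (fun z => - complex.Re (f z)).
    by apply/funext => z; case: (f z).
  exact: contN.
have -> : (fun z => complex.Im (- f z)) = (fun z => - complex.Im (f z)).
  by apply/funext => z; case: (f z).
exact: contN.
Qed.

Lemma ccont_mul (f g : V -> C) : ccont f -> ccont g -> ccont (fun z => f z * g z).
Proof.
move=> [f1 f2] [g1 g2]; split.
  have -> : (fun z => complex.Re (f z * g z)) =
    (fun z => complex.Re (f z) * complex.Re (g z) - complex.Im (f z) * complex.Im (g z)).
    by apply/funext => z; case: (f z); case: (g z).
  by apply: contB; apply: contM.
have -> : (fun z => complex.Im (f z * g z)) =
  (fun z => complex.Re (f z) * complex.Im (g z) + complex.Im (f z) * complex.Re (g z)).
  by apply/funext => z; case: (f z) => a b; case: (g z) => c e /=; rewrite addrC.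
by apply: contD; apply: contM.
Qed.

Lemma ccont_conj (f : V -> C) : ccont f -> ccont (fun z => (f z)^*).
Proof.
move=> [f1 f2]; split.
  have -> : (fun z => complex.Re ((f z)^*)) = (fun z => complex.Re (f z)).
    by apply/funext => z; case: (f z).
  exact: f1.
have -> : (fun z => complex.Im ((f z)^*)) = (fun z => - complex.Im (f z)).
  by apply/funext => z; case: (f z).
exact: contN.
Qed.

Lemma ccont_sum (I : Type) (s : seq I) (P : pred I) (F : I -> V -> C) :
  (forall i, ccont (F i)) -> ccont (fun z => \sum_(i <- s | P i) F i z).
Proof.
move=> hF; elim: s => [|x s IH].
  have -> : (fun z => \sum_(i <- [::] | P i) F i z) = fun=> 0.
    by apply/funext => z; rewrite big_nil.
  exact: ccont_cst.
have -> : (fun z => \sum_(i <- x :: s | P i) F i z) =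
  (fun z => (if P x then F x z else 0) + \sum_(i <- s | P i) F i z).
  apply/funext => z; rewrite big_cons; case: (P x) => //; by rewrite add0r.
apply: ccont_add => //; case: (P x) => //; exact: ccont_cst.
Qed.

Definition cmx p q (F : V -> 'M[C]_(p, q)) := forall i j, ccont (fun z => F z i j).

Lemma cmx_cst p q (M : 'M[C]_(p, q)) : cmx (fun=> M).
Proof. by move=> i j; apply: ccont_cst. Qed.
Lemma cmx_add p q (F G : V -> 'M[C]_(p, q)) : cmx F -> cmx G -> cmx (fun z => F z + G z).
Proof.
move=> hF hG i j.
have -> : (fun z => (F z + G z) i j) = (fun z => F z i j + G z i j).
  by apply/funext => z; rewrite mxE.
exact: ccont_add.
Qed.
Lemma cmx_opp p q (F : V -> 'M[C]_(p, q)) : cmx F -> cmx (fun z => - F z).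
Proof.
move=> hF i j.
have -> : (fun z => (- F z) i j) = (fun z => - F z i j).
  by apply/funext => z; rewrite mxE.
exact: ccont_opp.
Qed.
Lemma cmx_mul p q r (F : V -> 'M[C]_(p, q)) (G : V -> 'M[C]_(q, r)) :
  cmx F -> cmx G -> cmx (fun z => F z *m G z).
Proof.
move=> hF hG i j.
have -> : (fun z => (F z *m G z) i j) = (fun z => \sum_k F z i k * G z k j).
  by apply/funext => z; rewrite mxE.
by apply: ccont_sum => k; apply: ccont_mul.
Qed.
Lemma cmx_adjm p q (F : V -> 'M[C]_(p, q)) : cmx F -> cmx (fun z => adjm (F z)).
Proof.
move=> hF i j.
have -> : (fun z => adjm (F z) i j) = (fun z => (F z j i)^*).
  by apply/funext => z; rewrite adjm_entry.
exact: ccont_conj.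
Qed.

Lemma closed_ge0 (f : V -> R) : continuous f -> closed [set z | 0 <= f z].
Proof.
move=> cf.
have -> : [set z | 0 <= f z] = f @^-1` [set x | 0 <= x] by [].
apply: preimage_closed; last exact: closed_ge.
by move=> z _; apply: cf.
Qed.
Lemma closed_eq0 (f : V -> R) : continuous f -> closed [set z | f z = 0].
Proof.
move=> cf.
have -> : [set z | f z = 0] = [set z | 0 <= f z] `&` [set z | 0 <= - f z].
  apply/seteqP; split => z /=.
    by move=> ->; rewrite oppr0 lexx.
  by move=> [h1 h2]; apply/eqP; rewrite eq_le h1 andbT -oppr_ge0.
by apply: closedI; apply: closed_ge0 => //; apply: contN.
Qed.
Lemma closed_forall (T : Type) (P : T -> set V) :
  (forall t, closed (P t)) -> closed [set z | forall t, P t z].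
Proof.
move=> h.
have -> : [set z | forall t, P t z] = \bigcap_(t in setT) P t.
  by apply/seteqP; split => z /= hz t //; apply: hz.
by apply: closed_bigI => t _; apply: h.
Qed.

End Topo3.
Section Coords.
Local Open Scope classical_set_scope.
Variable R : realType.
Local Notation C := R[i].
Variable d : nat.

Definition Idx := (('I_d * 'I_d * bool) + ('I_d * bool))%type.
Local Notation N := #|{: Idx}|.
Local Notation V := 'rV[R]_N.

Definition co (z : V) (k : Idx) : R := z 0 (enum_rank k).
Definition Xz (z : V) : 'M[C]_d :=
  \matrix_(i, j) Complex (co z (inl (i, j, false))) (co z (inl (i, j, true))).
Definition Pz (z : V) : 'cV[C]_d :=
  \col_i Complex (co z (inr (i, false))) (co z (inr (i, true))).
Definition Hz (z : V) := Xz z + adjm (Xz z).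
Definition enc (X : 'M[C]_d) (p : 'cV[C]_d) : V :=
  \row_k match enum_val k with
         | inl (i, j, b) => if b then complex.Im (X i j) else complex.Re (X i j)
         | inr (i, b) => if b then complex.Im (p i 0) else complex.Re (p i 0)
         end.

Lemma co_enc X p k : co (enc X p) k =
  match k with
  | inl (i, j, b) => if b then complex.Im (X i j) else complex.Re (X i j)
  | inr (i, b) => if b then complex.Im (p i 0) else complex.Re (p i 0)
  end.
Proof. by rewrite /co mxE enum_rankK. Qed.

Lemma Xz_enc X p : Xz (enc X p) = X.
Proof. by apply/matrixP => i j; rewrite mxE !co_enc; case: (X i j). Qed.
Lemma Pz_enc X p : Pz (enc X p) = p.
Proof. by apply/matrixP => i j; rewrite mxE !co_enc ord1; case: (p i 0). Qed.

Lemma cmx_Xz : cmx Xz.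
Proof.
move=> i j.
have -> : (fun z => Xz z i j) =
  (fun z => Complex (co z (inl (i, j, false))) (co z (inl (i, j, true)))).
  by apply/funext => z; rewrite mxE.
by apply: ccont_cplx; apply: cont_coord.
Qed.
Lemma cmx_Pz : cmx Pz.
Proof.
move=> i j.
have -> : (fun z => Pz z i j) =
  (fun z => Complex (co z (inr (i, false))) (co z (inr (i, true)))).
  by apply/funext => z; rewrite mxE.
by apply: ccont_cplx; apply: cont_coord.
Qed.

Lemma cplx_ext (x y : C) : complex.Re x = complex.Re y -> complex.Im x = complex.Im y -> x = y.
Proof. by case: x => a b; case: y => c e /= -> ->. Qed.

Lemma conjR (r : R) : ((r%:C)%C)^* = (r%:C)%C.
Proof. by apply: cplx_ext => //=; rewrite oppr0. Qed.

Lemma XzD z w : Xz (z + w) = Xz z + Xz w.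
Proof. by apply/matrixP => i j; rewrite !mxE /co !mxE. Qed.
Lemma XzZ (r : R) z : Xz (r *: z) = (r%:C)%C *: Xz z.
Proof.
apply/matrixP => i j; rewrite !mxE /co !mxE.
apply: cplx_ext; by rewrite ?ReM_r ?ImM_r.
Qed.
Lemma HzD z w : Hz (z + w) = Hz z + Hz w.
Proof. by rewrite /Hz XzD adjmD addrACA. Qed.
Lemma HzZ (r : R) z : Hz (r *: z) = (r%:C)%C *: Hz z.
Proof. by rewrite /Hz XzZ adjmZ scalerDr conjR. Qed.
Lemma Hz_herm z : Defs.hermitian (Hz z).
Proof. by rewrite /Defs.hermitian adjmE /Hz adjmD adjmK addrC. Qed.

Definition l1 (z : V) := \sum_i \sum_j
  (`|co z (inl (i, j, false))| + `|co z (inl (i, j, true))|).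
Definition pn (z : V) := complex.Re ((adjm (Pz z) *m Pz z) 0 0).
Definition Pv (p u : 'cV[C]_d) := u - p *m (adjm p *m u).

Definition K1 := [set z : V |
  (forall i j, complex.Re (Xz z i j - (Xz z j i)^*) = 0 /\
               complex.Im (Xz z i j - (Xz z j i)^*) = 0) /\
  l1 z - 1 = 0 /\ pn z - 1 = 0].
Definition K2 := [set z : V | K1 z /\
  (complex.Re (\tr (Xz z)) = 0 /\ complex.Im (\tr (Xz z)) = 0) /\
  forall u, 0 <= complex.Re (qf (Xz z) (Pv (Pz z) u))].

Lemma closed_K1 : closed K1.
Proof.
apply: closedI.
  apply: closed_forall => i; apply: closed_forall => j; apply: closedI.
    apply: closed_eq0.
    have := cmx_add cmx_Xz (cmx_opp (cmx_adjm cmx_Xz)) i j.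
    have E : (fun z => (Xz z + - adjm (Xz z)) i j) = (fun z => Xz z i j - (Xz z j i)^*).
      by apply/funext => z; rewrite !mxE.
    by rewrite E => -[].
  apply: closed_eq0.
  have := cmx_add cmx_Xz (cmx_opp (cmx_adjm cmx_Xz)) i j.
  have E : (fun z => (Xz z + - adjm (Xz z)) i j) = (fun z => Xz z i j - (Xz z j i)^*).
    by apply/funext => z; rewrite !mxE.
  by rewrite E => -[].
apply: closedI; apply: closed_eq0; apply: contB; try exact: cont_cst.
  by apply: cont_sum => i; apply: cont_sum => j; apply: contD; apply: contA; apply: cont_coord.
by have [] := cmx_mul (cmx_adjm cmx_Pz) cmx_Pz 0 0.
Qed.

Lemma closed_K2 : closed K2.
Proof.
apply: closedI; first exact: closed_K1.
have ctr : ccont (fun z => \tr (Xz z)).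
  by apply: ccont_sum => i; apply: cmx_Xz.
apply: closedI.
  by case: ctr => c1 c2; apply: closedI; apply: closed_eq0.
apply: closed_forall => u; apply: closed_ge0.
have cPv : cmx (fun z => Pv (Pz z) u).
  apply: cmx_add; first exact: cmx_cst.
  by apply: cmx_opp; apply: cmx_mul; [exact: cmx_Pz | apply: cmx_mul; [apply: cmx_adjm; exact: cmx_Pz | exact: cmx_cst]].
have := cmx_mul (cmx_mul (cmx_adjm cPv) cmx_Xz) cPv 0 0.
by case.
Qed.

End Coords.
Section Compact.
Local Open Scope classical_set_scope.
Variable R : realType.
Local Notation C := R[i].
Variable d : nat.
Local Notation N := #|{: Idx d}|.
Local Notation V := 'rV[R]_N.

Lemma sum_ge_term (I : finType) (F : I -> R) i0 : (forall i, 0 <= F i) -> F i0 <= \sum_i F i.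
Proof.
move=> h; rewrite (bigD1 i0) //= lerDl; exact: sumr_ge0.
Qed.

Lemma pn_sum (z : V) : pn z = \sum_i (co z (inr (i, false)) ^+ 2 + co z (inr (i, true)) ^+ 2).
Proof.
rewrite /pn mxE Re_sum; apply: eq_bigr => i _.
by rewrite adjm_entry !mxE /= mulNr opprK !expr2.
Qed.

Lemma K1_coord (z : V) k : K1 z -> `|z 0 k| <= 1.
Proof.
move=> [_ [hl hp]].
have -> : z 0 k = co z (enum_val k) by rewrite /co enum_valK.
case: (enum_val k) => [[[i j] b]|[i b]].
  have hl' : l1 z = 1 by apply/eqP; rewrite -subr_eq0; apply/eqP.
  rewrite -hl' /l1.
  apply: le_trans (sum_ge_term i _); last first.
    by move=> i'; apply: sumr_ge0 => j' _; apply: addr_ge0.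
  apply: le_trans (sum_ge_term j _); last by move=> j'; apply: addr_ge0.
  by case: b; [rewrite lerDr | rewrite lerDl].
have hp' : pn z = 1 by apply/eqP; rewrite -subr_eq0; apply/eqP.
have : co z (inr (i, b)) ^+ 2 <= 1.
  rewrite -hp' pn_sum.
  apply: le_trans (sum_ge_term i _); last first.
    by move=> i'; apply: addr_ge0; apply: sqr_ge0.
  by case: b; [rewrite lerDr sqr_ge0 | rewrite lerDl sqr_ge0].
move=> h; rewrite ler_norml; apply/andP; split; nra.
Qed.

Lemma bounded_K1 : bounded_set (@K1 R d).
Proof.
exists 1; split => // M M1 z Kz /=.
apply: le_trans (ltW M1).
by apply: norm_le => // k; apply: K1_coord.
Qed.

Lemma compact_K1 : compact (@K1 R d).
Proof. apply: bounded_closed_compact; [exact: bounded_K1 | exact: closed_K1]. Qed.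

Lemma compact_K2 : compact (@K2 R d).
Proof.
apply: (subclosed_compact (@closed_K2 R d) compact_K1).
by move=> z [].
Qed.

End Compact.

Lemma pos_lb (R : realType) n (A : set 'rV[R]_n) (f : 'rV[R]_n -> R) :
  compact A -> continuous f -> (forall z, A z -> 0 < f z) ->
  exists c, 0 < c /\ forall z, A z -> c <= f z.
Proof.
move=> cA cf fpos.
have [[z0 Az0]|A0] := pselect (exists z, A z); last first.
  by exists 1; split => // z Az; exfalso; apply: A0; exists z.
have [|c cA' cmin] := @EVT_min_rV R n f A _ cA (continuous_subspaceT cf).
  by exists z0.
exists (f c); split.
  by apply: fpos; move: cA'; rewrite inE.
by move=> z Az; apply: cmin; rewrite inE.
Qed.
Section LinBound.
Variable R : realType.
Variable n : nat.
Local Notation V := 'rV[R]_n.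
Variables (W : zmodType) (sc : R -> W -> W) (Nw : W -> R) (P : W -> Prop) (B : V -> W).
Hypotheses (PB : forall z, P (B z))
  (N0 : forall x, P x -> 0 <= Nw x)
  (Ntri : forall x y, P x -> P y -> Nw (x + y) <= Nw x + Nw y)
  (NZ : forall r x, P x -> Nw (sc r x) = `|r| * Nw x)
  (BD : forall z w, B (z + w) = B z + B w)
  (BZ : forall r z, B (r *: z) = sc r (B z)).

Lemma NB0 : Nw (B 0) = 0.
Proof. by rewrite -(scale0r (0 : V)) BZ NZ // normr0 mul0r. Qed.

Lemma BB z w : B (z - w) = B z - B w.
Proof.
apply/eqP; rewrite eq_sym subr_eq -BD subrK //.
Qed.

Lemma lin_bound z : Nw (B z) <= (\sum_k Nw (B (delta_mx 0 k))) * `|z|.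
Proof.
have H (s : seq 'I_n) : Nw (B (\sum_(k <- s) z 0 k *: delta_mx 0 k)) <=
    \sum_(k <- s) `|z 0 k| * Nw (B (delta_mx 0 k)).
  elim: s => [|k s IH]; first by rewrite !big_nil NB0.
  rewrite !big_cons BD; apply: le_trans (Ntri _ _) _ => //.
  by rewrite BZ NZ // lerD2l.
rewrite {1}(row_sum_delta z); apply: le_trans (H _) _.
rewrite mulr_suml; apply: ler_sum => k _; rewrite mulrC.
apply: ler_wpM2l; [exact: N0 | exact: coord_le_norm].
Qed.

Lemma lin_cont : continuous (fun z => Nw (B z)).
Proof.
apply: (@lip_cont R n _ (\sum_k Nw (B (delta_mx 0 k)))) => z w.
have h1 : Nw (B z) <= Nw (B w) + Nw (B (z - w)).
  by have := Ntri (PB w) (PB (z - w)); rewrite -BD addrC subrK.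
have h2 : Nw (B w) <= Nw (B z) + Nw (B (z - w)).
  have := Ntri (PB z) (PB (w - z)); rewrite -BD addrC subrK.
  have -> : w - z = (-1) *: (z - w) by rewrite scaleN1r opprB.
  by rewrite BZ NZ // normrN normr1 mul1r.
apply: le_trans (lin_bound (z - w)).
rewrite ler_norml; apply/andP; split; lra.
Qed.
End LinBound.
Section MainAux.
Local Open Scope classical_set_scope.
Variable R : realType.
Local Notation C := R[i].
Variable d : nat.
Local Notation N := #|{: Idx d}|.
Local Notation V := 'rV[R]_N.

Lemma realCM (r r' : R) : ((r * r')%:C)%C = (r%:C)%C * (r'%:C)%C.
Proof. by apply: cplx_ext => /=; rewrite ?mulr0 ?subr0 ?mul0r ?addr0. Qed.
Lemma realCD (r r' : R) : ((r + r')%:C)%C = (r%:C)%C + (r'%:C)%C.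
Proof. by apply: cplx_ext => /=; rewrite ?addr0. Qed.

Lemma herm_entry (Y : 'M[C]_d) : Defs.hermitian Y -> forall i j, Y i j = (Y j i)^*.
Proof. by move=> hY i j; rewrite -[in LHS]hY adjmE adjm_entry. Qed.

Lemma K1_herm (z : V) : K1 z -> adjm (Xz z) = Xz z.
Proof.
move=> [hh _]; apply/matrixP => i j; rewrite adjm_entry.
have [h1 h2] := hh i j.
apply/eqP; rewrite eq_sym -subr_eq0; apply/eqP; apply: cplx_ext => //.
Qed.

Lemma K1_Hz (z : V) : K1 z -> Hz z = Xz z + Xz z.
Proof. by move=> Kz; rewrite /Hz K1_herm. Qed.

Lemma K1_Xz_neq0 (z : V) : K1 z -> Xz z != 0.
Proof.
move=> Kz; apply/eqP => X0; case: Kz => [_ [hl _]].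
have : l1 z = 0.
  rewrite /l1 big1 // => i _; rewrite big1 // => j _.
  have /matrixP/(_ i j) := X0; rewrite !mxE => -[-> ->].
  by rewrite normr0 addr0.
move=> l0; move: hl; rewrite l0 sub0r => /eqP; rewrite oppr_eq0 oner_eq0.
by [].
Qed.

Definition l1m (Y : 'M[C]_d) := \sum_i \sum_j (`|complex.Re (Y i j)| + `|complex.Im (Y i j)|).

Lemma l1m_ge0 (Y : 'M[C]_d) : 0 <= l1m Y.
Proof. by apply: sumr_ge0 => i _; apply: sumr_ge0 => j _; apply: addr_ge0. Qed.

Lemma l1m_gt0 (Y : 'M[C]_d) : Y != 0 -> 0 < l1m Y.
Proof.
move=> Y0.
have [[i [j Yij]]|H] := pselect (exists i j, Y i j != 0); last first.
  exfalso; move/eqP: Y0; apply; apply/matrixP => i j; rewrite mxE.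
  by case: (eqVneq (Y i j) 0) => // h; exfalso; apply: H; exists i, j.
have pos : 0 < `|complex.Re (Y i j)| + `|complex.Im (Y i j)|.
  have [h|h] := eqVneq (complex.Re (Y i j)) 0.
    have hi : complex.Im (Y i j) != 0.
      apply/eqP => hi; move/eqP: Yij; apply; apply: cplx_ext => //.
    by rewrite h normr0 add0r normr_gt0.
  by apply: ltr_wpDr => //; rewrite normr_gt0.
apply: (lt_le_trans pos).
apply: le_trans (sum_ge_term i _); last first.
  by move=> i'; apply: sumr_ge0 => j' _; apply: addr_ge0.
by apply: le_trans (sum_ge_term j _) => // j'; apply: addr_ge0.
Qed.

Lemma l1mZ (r : R) (Y : 'M[C]_d) : 0 <= r -> l1m ((r%:C)%C *: Y) = r * l1m Y.
Proof.
move=> r0; rewrite /l1m mulr_sumr; apply: eq_bigr => i _.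
rewrite mulr_sumr; apply: eq_bigr => j _; rewrite !mxE ReM_r ImM_r !normrM.
by rewrite ger0_norm // mulrDr.
Qed.

Lemma rep (Y : 'M[C]_d) (p : 'cV[C]_d) : Defs.hermitian Y -> Y != 0 ->
  (adjm p *m p) 0 0 = 1 ->
  exists (z : V) (t : R), K1 z /\ 0 < t /\ Y = (t%:C)%C *: Hz z /\ Pz z = p /\
     Xz z = (((2 * t)^-1)%:C)%C *: Y.
Proof.
move=> hY Y0 pp.
set s := l1m Y; have s0 : 0 < s by apply: l1m_gt0.
set W := ((s^-1)%:C)%C *: Y.
have hW : adjm W = W.
  by rewrite /W adjmZ conjR -adjmE hY.
exists (enc W p), (s / 2).
have XE : Xz (enc W p) = W by apply: Xz_enc.
have K : K1 (enc W p).
  split.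
    move=> i j; rewrite XE.
    have -> : W i j - (W j i)^* = 0.
      by apply/eqP; rewrite subr_eq0 -adjm_entry hW.
    by [].
  split.
    have -> : l1 (enc W p) = l1m W.
      by rewrite /l1 /l1m; apply: eq_bigr => i _; apply: eq_bigr => j _; rewrite !co_enc.
    by rewrite /W l1mZ ?invr_ge0 ?ltW // mulVf ?gt_eqF // subrr.
  by rewrite /pn Pz_enc pp subrr.
split => //; split; first by rewrite divr_gt0.
split; last first.
  split; first exact: Pz_enc.
  by rewrite XE /W mulrC -mulrA mulVf ?pnatr_eq0 // mulr1.
rewrite /Hz XE hW /W -scalerDl -realCD scalerA -realCM.
have -> : s / 2 * (s^-1 + s^-1) = 1.
  by field; rewrite gt_eqF.
by rewrite scale1r.
Qed.

End MainAux.
Section QF.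
Variable R : realType.
Local Notation C := R[i].
Lemma qf_add d (A B : 'M[C]_d) w : qf (A + B) w = qf A w + qf B w.
Proof. by rewrite /qf mulmxDr mulmxDl mxE. Qed.
Lemma qf_opp d (A : 'M[C]_d) w : qf (- A) w = - qf A w.
Proof. by rewrite /qf mulmxN mulNmx mxE. Qed.
Lemma qf_scale d c (A : 'M[C]_d) w : qf (c *: A) w = c * qf A w.
Proof. by rewrite /qf -scalemxAr -scalemxAl mxE. Qed.
End QF.

Theorem theorem2 (R : realType) (d l m : nat)
  (NH : 'M[R[i]]_d -> R) (NM : 'M[R]_(l, m) -> R)
  (Q : 'I_l -> 'I_m -> 'M[R[i]]_d) :
  (0 < d)%N -> (0 < l)%N -> (0 < m)%N ->
  is_norm_H NH -> is_norm_M NM ->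
  is_scheme Q -> determines_pure Q ->
  exists eps : R, 0 < eps /\
    forall Q' : 'I_l -> 'I_m -> 'M[R[i]]_d,
      is_scheme Q' -> eps_close NH NM eps Q Q' -> determines_pure Q'.
Proof.
move=> d0 l0 m0 [NH0 [NHdef [NHZ NHtri]]] [NM0 [NMdef [NMZ NMtri]]] sQ dp.
pose V := 'rV[R]_#|{: Idx d}|.
pose X_ := @Xz R d; pose H_ := @Hz R d.
have cH : continuous (fun z : V => NH (H_ z)).
  apply: (@lin_cont R _ _ (fun r X => ((r%:C)%C *: X)) NH (@Defs.hermitian R d) H_).
  - exact: Hz_herm.
  - exact: NH0.
  - by move=> x y hx hy; apply: NHtri.
  - by move=> r x hx; apply: NHZ.
  - exact: HzD.
  - exact: HzZ.
have two_eq0 (p q : nat) (A : 'M[R[i]]_(p, q)) : A + A = 0 -> A = 0.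
  move=> /eqP; rewrite -mulr2n -scaler_nat scaler_eq0 pnatr_eq0 /=.
  by move=> /eqP.
have two_eq0R (p q : nat) (A : 'M[R]_(p, q)) : A + A = 0 -> A = 0.
  move=> /eqP; rewrite -mulr2n -scaler_nat scaler_eq0 pnatr_eq0 /=.
  by move=> /eqP.
have Hpos : forall z : V, K1 z -> 0 < NH (H_ z).
  move=> z Kz; rewrite lt_def (NH0 _ (Hz_herm z)) andbT; apply/eqP => h.
  have := NHdef _ (Hz_herm z) h; rewrite /H_ K1_Hz // => /two_eq0 h0.
  by move: (K1_Xz_neq0 Kz); rewrite h0 eqxx.
have [c0 [c0p c0b]] := pos_lb (@compact_K1 R d) cH Hpos.
have cM : continuous (fun z : V => NM (MQ Q (H_ z))).
  apply: (@lin_cont R _ _ (fun r A => r *: A) NM (fun _ => True) (fun z => MQ Q (H_ z))).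
  - by [].
  - by move=> x _; apply: NM0.
  - by move=> x y _ _; apply: NMtri.
  - by move=> r x _; apply: NMZ.
  - by move=> z w; rewrite /H_ HzD MQD.
  - by move=> r z; rewrite /H_ HzZ MQZ.
have Mpos : forall z : V, K2 z -> 0 < NM (MQ Q (H_ z)).
  move=> z [Kz [[tr1 tr2] pz]].
  rewrite lt_def NM0 andbT; apply/eqP => h.
  have := NMdef _ h; rewrite /H_ K1_Hz // MQD => /two_eq0R XM.
  have X0 : Xz z = 0.
    apply: (@key R d l m Q (Xz z) (Pz z) dp (K1_herm Kz)) XM.
      by apply: cplx_ext.
    move=> u hu; have := pz u.
    have -> : Pv (Pz z) u = u.
      rewrite /Pv; have -> : adjm (Pz z) *m u = 0 by apply/matrixP => i j; rewrite !ord1 hu mxE.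
      by rewrite mulmx0 subr0.
    by [].
  by move: (K1_Xz_neq0 Kz); rewrite X0 eqxx.
have [c1 [c1p c1b]] := pos_lb (@compact_K2 R d) cM Mpos.
set LH := \sum_k NH (H_ (delta_mx 0 k)).
have LHb : forall z : V, NH (H_ z) <= LH * `|z|.
  apply: (@lin_bound R _ _ (fun r X => ((r%:C)%C *: X)) NH (@Defs.hermitian R d) H_).
  - exact: Hz_herm.
  - exact: NH0.
  - by move=> x y hx hy; apply: NHtri.
  - by move=> r x hx; apply: NHZ.
  - exact: HzD.
  - exact: HzZ.
have K1n : forall z : V, K1 z -> `|z| <= 1.
  by move=> z Kz; apply: norm_le => // k; apply: K1_coord.
have LH0 : 0 <= LH by apply: sumr_ge0 => k _; apply: NH0; apply: Hz_herm.
have herm0 : Defs.hermitian (0 : 'M[R[i]]_d).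
  by rewrite /Defs.hermitian adjmE adjm0.
have NH00 : NH 0 = 0.
  by rewrite -(scale0r (0 : 'M[R[i]]_d)) -[0 : R[i]]/((0%:C)%C) NHZ // normr0 mul0r.
have NM00 : NM 0 = 0.
  by rewrite -(scale0r (0 : 'M[R]_(l, m))) NMZ normr0 mul0r.
pose p0 : 'cV[R[i]]_d := delta_mx (Ordinal d0) 0.
have pp0 : (adjm p0 *m p0) 0 0 = 1.
  by rewrite mul_delta_entry adjm_entry /p0 delta_entry eqxx conjC1.
exists (c1 / (LH + 1)); split; first by rewrite divr_gt0 // ltr_wpDl.
move=> Q' _ close.
set L := fun X => MQ Q X - MQ Q' X.
have LD X Y : L (X + Y) = L X + L Y by rewrite /L !MQD addrACA opprD.
have LZ (r : R) X : L ((r%:C)%C *: X) = r *: L X by rewrite /L !MQZ scalerBr.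
set LL := \sum_k NM (L (H_ (delta_mx 0 k))).
have LLb : forall z : V, NM (L (H_ z)) <= LL * `|z|.
  apply: (@lin_bound R _ _ (fun r A => r *: A) NM (fun _ => True) (fun z => L (H_ z))).
  - by [].
  - by move=> x _; apply: NM0.
  - by move=> x y _ _; apply: NMtri.
  - by move=> r x _; apply: NMZ.
  - by move=> z w; rewrite /H_ HzD LD.
  - by move=> r z; rewrite /H_ HzZ LZ.
have LL0 : 0 <= LL by apply: sumr_ge0 => k _; apply: NM0.
set S := ([set NM (L X) | X in [set X | Defs.hermitian X /\ NH X <= 1]])%classic.
have hS : has_sup S.
  split; first by exists (NM (L 0)), 0 => //; split => //; rewrite NH00.
  exists (LL / c0) => y [X [hX NX] <-].
  have [->|X0] := eqVneq X 0.
    have -> : L 0 = 0 by rewrite /L !MQ0 subrr.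
    by rewrite NM00 divr_ge0 // ltW.
  have [z [t [Kz [t0 [XE _]]]]] := rep hX X0 pp0.
  have e1 : NM (L X) = t * NM (L (H_ z)).
    rewrite XE LZ (NMZ t (L (Hz z))); congr (_ * _); apply: ger0_norm; exact: ltW.
  have e2 : NH X = t * NH (H_ z).
    rewrite XE (NHZ _ _ (Hz_herm z)); congr (_ * _); apply: ger0_norm; exact: ltW.
  have b1 : NM (L (H_ z)) <= LL.
    by apply: le_trans (LLb z) _; rewrite ler_piMr // K1n.
  have b2 : c0 <= NH (H_ z) by apply: c0b.
  have tc : t * c0 <= 1.
    by apply: le_trans NX; rewrite e2 ler_wpM2l // ltW.
  rewrite e1 ler_pdivlMr //.
  have : t * NM (L (H_ z)) * c0 <= t * LL * c0.
    by rewrite ler_wpM2r ?ler_wpM2l // ltW.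
  move=> h; apply: le_trans h _.
  by rewrite -mulrA [LL * c0]mulrC mulrA ler_piMl // mulr_ge0 // ltW.
have opb : forall X, Defs.hermitian X -> NH X <= 1 -> NM (L X) <= opnorm NH NM L.
  by move=> X hX NX; apply: (sup_upper_bound hS); exists X.
have opb2 : forall X, Defs.hermitian X -> 0 < NH X -> NM (L X) <= opnorm NH NM L * NH X.
  move=> X hX NX.
  have hX' : Defs.hermitian ((((NH X)^-1)%:C)%C *: X).
    by rewrite /Defs.hermitian adjmE adjmZ conjR -adjmE hX.
  have := opb _ hX'.
  have e1 : NH ((((NH X)^-1)%:C)%C *: X) = (NH X)^-1 * NH X.
    rewrite (NHZ _ _ hX); congr (_ * _); apply: ger0_norm.
    by rewrite invr_ge0 ltW.
  have e2 : NM (L ((((NH X)^-1)%:C)%C *: X)) = (NH X)^-1 * NM (L X).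
    rewrite LZ NMZ; congr (_ * _); apply: ger0_norm.
    by rewrite invr_ge0 ltW.
  rewrite e1 mulVf ?gt_eqF // lexx e2 => /(_ isT) h.
  by move: h; rewrite mulrC ler_pdivrMr.
move=> sig rho [psi [pp sigE]] [[hrho psdrho] trrho] Meq.
have [//|ne] := eqVneq rho sig; exfalso.
set Y := rho - sig.
have hsig : adjm sig = sig by rewrite sigE adjmM adjmK.
have hY : Defs.hermitian Y.
  by rewrite /Defs.hermitian adjmE /Y adjmB hsig -adjmE hrho.
have Y0 : Y != 0 by rewrite /Y subr_eq0.
have [z [t [Kz [t0 [YE [Pzp XzE]]]]]] := rep hY Y0 pp.
have pp1 : adjm psi *m psi = 1%:M by apply/matrixP => i j; rewrite !ord1 pp mxE.
have trsig : \tr sig = 1.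
  by rewrite sigE mxtrace_mulC pp1 mxtrace1.
have trY : \tr Y = 0.
  rewrite /Y mxtraceD trrho.
  have -> : \tr (- sig) = - \tr sig by rewrite -scaleN1r mxtraceZ mulN1r.
  by rewrite trsig subrr.
have K2z : K2 z.
  split => //; split.
    by rewrite XzE mxtraceZ trY mulr0.
  move=> u; set w := Pv (Pz z) u.
  have aw : adjm psi *m w = 0.
    by rewrite /w /Pv Pzp mulmxBr !mulmxA pp1 mul1mx subrr.
  have qs : qf sig w = 0.
    by rewrite /qf sigE -!mulmxA aw !mulmx0 mxE.
  rewrite XzE qf_scale /Y qf_add qf_opp qs oppr0 addr0 ReM_r.
  apply: mulr_ge0; first by rewrite invr_ge0 mulr_ge0 // ltW.
  have := psdrho w; rewrite -/(qf rho w) lecE => /andP [_ h].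
  exact: h.
have MY : MQ Q' Y = 0 by rewrite /Y MQB Meq subrr.
have LY : L Y = MQ Q Y by rewrite /L MY subr0.
have ineq1 : t * c1 <= NM (MQ Q Y).
  have e3 : NM (MQ Q Y) = t * NM (MQ Q (H_ z)).
    by rewrite YE MQZ NMZ; congr (_ * _); apply: ger0_norm; exact: ltW.
  by rewrite e3 ler_pM2l //; apply: c1b.
have NHY : NH Y = t * NH (H_ z).
  rewrite YE (NHZ _ _ (Hz_herm z)); congr (_ * _); apply: ger0_norm; exact: ltW.
have ineq2 : NH Y <= t * LH.
  rewrite NHY ler_pM2l //; apply: le_trans (LHb z) _.
  by rewrite ler_piMr // K1n.
have NHY0 : 0 < NH Y.
  by rewrite NHY mulr_gt0 //; apply: Hpos.
have ineq3 := opb2 Y hY NHY0.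
rewrite LY in ineq3.
have close' : opnorm NH NM L < c1 / (LH + 1) := close.
set e := c1 / (LH + 1) in close'.
have eE : e * (LH + 1) = c1 by rewrite /e mulfVK // gt_eqF // ltr_wpDl.
have f1 : opnorm NH NM L * NH Y < e * NH Y by rewrite ltr_pM2r.
have e0 : 0 < e by rewrite /e divr_gt0 // ltr_wpDl.
have f2 : e * NH Y <= e * (t * LH) by rewrite ler_wpM2l // ltW.
have f3 : e * (t * LH) < t * c1.
  rewrite -eE mulrCA ltr_pM2l // ltr_pM2l //; lra.
lra.
Qed.
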